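(* Let $\mathcal{X}$ be a right coideal of $\mathcal{U}$ (i.e. a subspace with $\Delta(\mathcal{X})\subset\mathcal{X}\otimes\mathcal{U}$) and let $X\in\mathcal{X}$, written in the PBW basis as $X=\sum_{i,\nu,j,k}\alpha_{i,\nu,j,k}F^{(i)}f_\nu E^{(j)}G^{(k)}$ (finitely many nonzero $\alpha_{i,\nu,j,k}\in\mathbb{C}$, $\nu\in\mathbb{C}^\times$, $i,j,k\in\mathbb{N}_0$). For $\mu\in\mathbb{C}^\times$ and $r,s,t\in\mathbb{N}_0$ put $$X_{r,\mu,s,t}:=\sum_{i\ge r,\ j\ge s,\ k\ge t}\alpha_{i,\mu,j,k}\,F^{(i-r)}f_{q^{-r-s}\mu}E^{(j-s)}G^{(k-t)}.$$ Then every $X_{r,\mu,s,t}$ lies in $\mathcal{X}$, and $\mathrm{Lin}\{X_{r,\mu,s,t}: r,s,t\in\mathbb{N}_0,\mu\in\mathbb{C}^\times\}$ is the smallest right coideal of $\mathcal{U}$ containing $X$.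
   Context: Let $q\in\mathbb{C}$ be transcendental (in particular $q\ne0$ and not a root of unity). $\mathcal{U}$ is the unital algebra generated by $E,F,G$ and $f_\mu$ ($\mu\in\mathbb{C}^\times=\mathbb{C}\setminus\{0\}$) with relations $f_\mu f_\nu=f_{\mu\nu}$, $f_\mu E=\mu^2Ef_\mu$, $f_\mu F=\mu^{-2}Ff_\mu$, $f_\mu G=Gf_\mu$, $GE=E(G+2)$, $GF=F(G-2)$, $EF-FE=(f_q-f_{q^{-1}})/(q-q^{-1})$; $f_1=1$. Fix $q^{1/2}$ and put $K=f_{q^{1/2}}$. $\mathcal{U}$ is a Hopf algebra with $\Delta E=E\otimes K+K^{-1}\otimes E$, $\Delta F=F\otimes K+K^{-1}\otimes F$, $\Delta G=1\otimes G+G\otimes1$, $\Delta f_\mu=f_\mu\otimes f_\mu$, $\varepsilon(E)=\varepsilon(F)=\varepsilon(G)=0$, $\varepsilon(f_\mu)=1$. Let $[k]=(q^k-q^{-k})/(q-q^{-1})$, $[k]!=[k]\cdots[1]$, $[0]!=1$, and $F^{(k)}=F^kK^{-k}/[k]!$, $E^{(k)}=K^{-k}E^k/[k]!$, $G^{(k)}=G^k/k!$. The elements $F^{(i)}f_\mu E^{(j)}G^{(k)}$ ($i,j,k\in\mathbb{N}_0$, $\mu\in\mathbb{C}^\times$) form a vector space basis of $\mathcal{U}$ (PBW basis). *)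

(* Defs.v *)
(* C := R[i] (complex numbers over a real type R, from
   mathcomp-real-closed's complex.v); R : realType is a complete archimedean
   ordered field, i.e. (a copy of) the reals, so R[i] is (a copy of) C. *)
From HB Require Import structures.
From mathcomp Require Import all_boot all_order all_algebra.
From mathcomp Require Import reals complex.
Set Implicit Arguments.
Unset Strict Implicit.
Unset Printing Implicit Defensive.
Import Order.TTheory GRing.Theory Num.Theory.
Local Open Scope ring_scope.

Section Defs.
Variable R : realType.
Local Notation C := (R[i]).

Definition transcendental (z : C) : Prop :=
  forall p : {poly rat}, p != 0 -> ~~ root (map_poly ratr p) z.

Definition qint (q : C) (k : nat) : C := (q ^+ k - q ^- k) / (q - q^-1).
Definition qfact (q : C) (k : nat) : C := \prod_(1 <= l < k.+1) qint q l.

Definition is_basis (I : eqType) (V : lmodType C) (P : I -> Prop) (b : I -> V)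
  : Prop :=
  (forall v : V, exists (s : seq I) (c : I -> C),
      (forall i, i \in s -> P i) /\ v = \sum_(i <- s) c i *: b i) /\
  (forall (s : seq I) (c : I -> C), uniq s -> (forall i, i \in s -> P i) ->
      \sum_(i <- s) c i *: b i = 0 -> forall i, i \in s -> c i = 0).

Definition span_of (I : eqType) (V : lmodType C) (P : I -> Prop) (b : I -> V)
  (v : V) : Prop :=
  exists (s : seq I) (c : I -> C),
    (forall i, i \in s -> P i) /\ v = \sum_(i <- s) c i *: b i.

Definition pbw_index := (nat * C * nat * nat)%type.
Definition pbw_ok (x : pbw_index) : Prop := x.1.1.2 != 0.

Section Algebra.
Variables (q sq : C) (U : algType C) (E F G : U) (f : C -> U).

Definition K : U := f sq.
Definition Kinv : U := f sq^-1.

Definition Fdiv (i : nat) : U := (qfact q i)^-1 *: (F ^+ i * Kinv ^+ i).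
Definition Ediv (j : nat) : U := (qfact q j)^-1 *: (Kinv ^+ j * E ^+ j).
Definition Gdiv (k : nat) : U := (k`!%:R : C)^-1 *: G ^+ k.

Definition pbw (x : pbw_index) : U :=
  Fdiv x.1.1.1 * f x.1.1.2 * Ediv x.1.2 * Gdiv x.2.

(* The defining relations of U together with the PBW theorem (which
   identifies U with the algebra of the paper). *)
Record is_U : Prop := {
  U_fmul : forall mu nu, mu != 0 -> nu != 0 -> f mu * f nu = f (mu * nu);
  U_f1 : f 1 = 1;
  U_fE : forall mu, mu != 0 -> f mu * E = mu ^+ 2 *: (E * f mu);
  U_fF : forall mu, mu != 0 -> f mu * F = mu ^- 2 *: (F * f mu);
  U_fG : forall mu, mu != 0 -> f mu * G = G * f mu;
  U_GE : G * E = E * (G + 2%:R);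
  U_GF : G * F = F * (G - 2%:R);
  U_EF : E * F - F * E = (q - q^-1)^-1 *: (f q - f q^-1);
  U_pbw : is_basis pbw_ok pbw
}.

(* T together with tens : U -> U -> T is the tensor algebra U (x) U:
   tens is bilinear, multiplicative componentwise, and the tensors of
   pairs of PBW basis vectors form a basis of T. *)
Record is_tensor_square (T : algType C) (tens : U -> U -> T) : Prop := {
  tens_linl : forall a x y z, tens (a *: x + y) z = a *: tens x z + tens y z;
  tens_linr : forall a x y z, tens z (a *: x + y) = a *: tens z x + tens z y;
  tens_mul : forall a b c d, tens a b * tens c d = tens (a * c) (b * d);
  tens_one : tens 1 1 = 1;
  tens_basis : is_basis (fun p : pbw_index * pbw_index => pbw_ok p.1 /\ pbw_ok p.2)
                        (fun p => tens (pbw p.1) (pbw p.2))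
}.

Record is_coproduct (T : algType C) (tens : U -> U -> T) (Delta : U -> T)
  : Prop := {
  Delta_lin : forall a x y, Delta (a *: x + y) = a *: Delta x + Delta y;
  Delta_mul : forall x y, Delta (x * y) = Delta x * Delta y;
  Delta_one : Delta 1 = 1;
  Delta_E : Delta E = tens E K + tens Kinv E;
  Delta_F : Delta F = tens F K + tens Kinv F;
  Delta_G : Delta G = tens 1 G + tens G 1;
  Delta_f : forall mu, mu != 0 -> Delta (f mu) = tens (f mu) (f mu)
}.

Definition subspace (X : U -> Prop) : Prop :=
  X 0 /\ forall (a : C) x y, X x -> X y -> X (a *: x + y).

Definition tensor_XU (T : algType C) (tens : U -> U -> T) (X : U -> Prop)
  (t : T) : Prop :=
  exists s : seq (U * U), (forall p, p \in s -> X p.1) /\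
    t = \sum_(p <- s) tens p.1 p.2.

Definition right_coideal (T : algType C) (tens : U -> U -> T) (Delta : U -> T)
  (X : U -> Prop) : Prop :=
  subspace X /\ forall x, X x -> tensor_XU tens X (Delta x).

Definition Xrmst (l : seq pbw_index) (alpha : pbw_index -> C)
  (r : nat) (mu : C) (s t : nat) : U :=
  \sum_(x <- l | (x.1.1.2 == mu) && (r <= x.1.1.1)%N && (s <= x.1.2)%N
                 && (t <= x.2)%N)
     alpha x *: pbw ((x.1.1.1 - r)%N, q ^- (r + s)%N * mu, (x.1.2 - s)%N, (x.2 - t)%N).

End Algebra.
End Defs.

(* Main.v *)
Require Import Defs.
From HB Require Import structures.
From mathcomp Require Import all_boot all_order all_algebra.
From mathcomp Require Import reals complex ring zify.
From Stdlib Require Import IndefiniteDescription.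
Import Order.TTheory GRing.Theory Num.Theory.
Local Open Scope ring_scope.

Set Implicit Arguments.
Unset Strict Implicit.


Section Gen.
Variable R : realType.
Local Notation C := (R[i]).

Lemma part_sum (J K : eqType) (W : nmodType) (key : J -> K) (u : seq K)
  (l : seq J) (F : J -> W) : uniq u -> (forall x, x \in l -> key x \in u) ->
  \sum_(k <- u) \sum_(x <- l | key x == k) F x = \sum_(x <- l) F x.
Proof.
move=> uu hl; under eq_bigr do rewrite big_mkcond.
rewrite exchange_big /= big_seq_cond [RHS]big_seq_cond.
apply: eq_bigr => x /andP[xl _].
rewrite (bigD1_seq (key x)) ?hl //= eqxx big1 ?addr0 // => k; rewrite eq_sym => /negPf ->.
by [].
Qed.

Lemma sumA (I : eqType) (W : lmodType C) (w : I -> W) (u : seq I)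
  (S : seq (I * C)) : uniq u -> (forall p, p \in S -> p.1 \in u) ->
  \sum_(i <- u) (\sum_(p <- S | p.1 == i) p.2) *: w i = \sum_(p <- S) p.2 *: w p.1.
Proof.
move=> uu hS.
transitivity (\sum_(i <- u) \sum_(p <- S | p.1 == i) p.2 *: w p.1).
  apply: eq_bigr => i _; rewrite scaler_suml; apply: eq_bigr => p /eqP -> //.
exact: part_sum.
Qed.

Section Basis.
Variables (I : eqType) (V : lmodType C) (P : I -> Prop) (b : I -> V).
Hypothesis hb : is_basis P b.

Lemma rep_ex (v : V) : exists sc : seq I * (I -> C),
  (forall i, i \in sc.1 -> P i) /\ v = \sum_(i <- sc.1) sc.2 i *: b i.
Proof. by case: (hb.1 v) => s [c [h1 h2]]; exists (s, c). Qed.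

Definition rep (v : V) := proj1_sig (constructive_indefinite_description _ (rep_ex v)).
Lemma repP v : (forall i, i \in (rep v).1 -> P i) /\ v = \sum_(i <- (rep v).1) (rep v).2 i *: b i.
Proof. exact: (proj2_sig (constructive_indefinite_description _ (rep_ex v))). Qed.

Definition psi (W : lmodType C) (w : I -> W) (v : V) : W :=
  \sum_(i <- (rep v).1) (rep v).2 i *: w i.

Lemma psi_rep (W : lmodType C) (w : I -> W) (S : seq (I * C)) :
  (forall p, p \in S -> P p.1) ->
  psi w (\sum_(p <- S) p.2 *: b p.1) = \sum_(p <- S) p.2 *: w p.1.
Proof.
move=> hS; set v := \sum_(p <- S) _.
have [h1 h2] := repP v.
rewrite /psi; set s0 := (rep v).1; set c0 := (rep v).2.
set S0 := [seq (j, c0 j) | j <- s0].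
have eS0 : forall (W' : lmodType C) (w' : I -> W'),
  \sum_(i <- s0) c0 i *: w' i = \sum_(p <- S0) p.2 *: w' p.1.
  by move=> W' w'; rewrite big_map.
set u := undup [seq p.1 | p <- S0 ++ S].
have uu : uniq u by apply: undup_uniq.
have inu : forall p, p \in S0 ++ S -> p.1 \in u.
  by move=> p hp; rewrite mem_undup; apply: map_f.
have inu0 : forall p, p \in S0 -> p.1 \in u by move=> p hp; apply: inu; rewrite mem_cat hp.
have inu1 : forall p, p \in S -> p.1 \in u by move=> p hp; apply: inu; rewrite mem_cat hp orbT.
set d := fun i => \sum_(p <- S0 | p.1 == i) p.2 - \sum_(p <- S | p.1 == i) p.2.
have hd : \sum_(i <- u) d i *: b i = 0.
  rewrite /d; under eq_bigr do rewrite scalerBl.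
  rewrite sumrB !sumA // -eS0 -h2 subrr //.
have Pu : forall i, i \in u -> P i.
  move=> i; rewrite mem_undup => /mapP[p]; rewrite mem_cat => /orP[] hp ->.
    by move: hp => /mapP[j js ->]; apply: h1.
  exact: hS.
have d0 := hb.2 u d uu Pu hd.
rewrite eS0 -(sumA w uu inu0) -(sumA w uu inu1).
apply: eq_big_seq => i iu; congr (_ *: _); apply/eqP; rewrite -subr_eq0.
by apply/eqP; apply: d0.
Qed.

Lemma rep_pairs (v : V) : exists S : seq (I * C),
  (forall p, p \in S -> P p.1) /\ v = \sum_(p <- S) p.2 *: b p.1.
Proof.
have [h1 h2] := repP v.
exists [seq (j, (rep v).2 j) | j <- (rep v).1]; split.
  by move=> p /mapP[j js ->]; apply: h1.
by rewrite big_map.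
Qed.

Lemma psi_lin (W : lmodType C) (w : I -> W) a x y :
  psi w (a *: x + y) = a *: psi w x + psi w y.
Proof.
have [S1 [h1 ->]] := rep_pairs x.
have [S2 [h2 ->]] := rep_pairs y.
have -> : a *: \sum_(p <- S1) p.2 *: b p.1 + \sum_(p <- S2) p.2 *: b p.1 =
  \sum_(p <- [seq (p.1, a * p.2) | p <- S1] ++ S2) p.2 *: b p.1.
  by rewrite big_cat big_map scaler_sumr; congr (_ + _); apply: eq_bigr => p _; rewrite scalerA.
have h3 : forall p, p \in [seq (p.1, a * p.2) | p <- S1] ++ S2 -> P p.1.
  move=> p; rewrite mem_cat => /orP[|]; last exact: h2.
  move=> hz; have [p1 hp1 ep] := mapP hz; rewrite ep /=; exact: (h1 p1 hp1).
rewrite !psi_rep //.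
by rewrite big_cat big_map scaler_sumr; congr (_ + _); apply: eq_bigr => p _; rewrite scalerA.
Qed.

Lemma psi0 (W : lmodType C) (w : I -> W) : psi w 0 = 0.
Proof.
have := psi_lin w 1 0 0; rewrite scaler0 add0r scale1r => /eqP.
by rewrite -subr_eq subrr eq_sym => /eqP.
Qed.

Lemma psi_sum (W : lmodType C) (w : I -> W) (J : Type) (s : seq J) (Fv : J -> V) :
  psi w (\sum_(j <- s) Fv j) = \sum_(j <- s) psi w (Fv j).
Proof.
elim: s => [|j s IH]; first by rewrite !big_nil psi0.
rewrite !big_cons; have := psi_lin w 1 (Fv j) (\sum_(j <- s) Fv j).
by rewrite !scale1r => ->; rewrite IH.
Qed.

Lemma psiZ (W : lmodType C) (w : I -> W) a x : psi w (a *: x) = a *: psi w x.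
Proof. by rewrite -[a *: x]addr0 psi_lin psi0 addr0. Qed.

End Basis.
End Gen.


Section Scal.
Variables (R : realType) (q : R[i]) (hq : transcendental q).

Lemma q_neq0 : q != 0.
Proof.
have := hq (p := 'X) (negbT (polyX_eq0 _)); rewrite map_polyX rootX.
by case: (q == 0).
Qed.

Lemma qpow_neq1 m : (0 < m)%N -> q ^+ m != 1.
Proof.
move=> m0.
have nz : ('X^m - (1 : rat)%:P) != 0.
  by rewrite -size_poly_eq0 size_XnsubC.
have := hq nz; rewrite rmorphB /= map_polyXn map_polyC /= rmorph1.
by rewrite /root !hornerE subr_eq0.
Qed.

Lemma qqi : q - q^-1 != 0.
Proof.
have q0 := q_neq0.
rewrite subr_eq0; apply/negP => /eqP h.
have : q ^+ 2 = 1 by rewrite expr2 {2}h mulfV.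
by move/eqP; rewrite (negPf (qpow_neq1 (m:=2) isT)).
Qed.

Lemma qint_neq0 n : qint q n.+1 != 0.
Proof.
have q0 := q_neq0.
rewrite /qint mulf_eq0 invr_eq0 negb_or qqi andbT subr_eq0.
apply/negP => /eqP h.
have : q ^+ (n.+1 + n.+1) = 1 by rewrite exprD {2}h mulfV // expf_neq0.
by move/eqP; rewrite (negPf (qpow_neq1 _)).
Qed.

Lemma comb_id (r m : nat) :
  (q ^- r.+1) ^- 2 * (q ^+ m * qint q m.+1) + q ^+ r * qint q r.+1 =
  q ^+ (r + m).+1 * qint q (r + m).+2.
Proof.
have q0 := q_neq0; have qq := qqi.
rewrite /qint !exprS !exprD.
set a := q ^+ r; set b := q ^+ m.
have a0 : a != 0 by rewrite expf_neq0.
have b0 : b != 0 by rewrite expf_neq0.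
rewrite ?invrK.
field.
have q2 : q * q - 1 != 0 by rewrite subr_eq0 -expr2 qpow_neq1.
by rewrite q0 q2 a0 b0.
Qed.

End Scal.


Lemma comb (R : realType) (W : lmodType R[i]) (Tm : nat -> W) (A B : nat -> R[i]) (N : R[i]) n :
  A 0%N = N -> B n = N -> (forall r, (r < n)%N -> A r.+1 + B r = N) ->
  \sum_(r < n.+1) (A r *: Tm r + B r *: Tm r.+1) = N *: \sum_(r < n.+2) Tm r.
Proof.
move=> hA hB hAB.
rewrite big_split /= big_ord_recl [X in _ + X]big_ord_recr /= hA hB.
rewrite [\sum_(r < n.+2) _]big_ord_recl big_ord_recr /=.
have e : \sum_(i < n) A (bump 0 i) *: Tm (bump 0 i) + \sum_(i < n) B i *: Tm i.+1 =
   N *: \sum_(i < n) Tm (bump 0 (widen_ord (leqnSn n) i)).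
  rewrite -big_split scaler_sumr; apply: eq_bigr => i _ /=.
  by rewrite /bump /= add1n -scalerDl hAB.
rewrite !scalerDr -e /bump /=.
by rewrite !add1n !addrA.
Qed.

Section Alg.
Variables (R : realType) (q sq : R[i]) (hq : transcendental q) (hsq : sq ^+ 2 = q).
Variables (U : algType R[i]) (E F G : U) (f : R[i] -> U).
Hypothesis hU : is_U q sq E F G f.
Variables (T : algType R[i]) (tens : U -> U -> T).
Hypothesis hT : is_tensor_square q sq E F G f tens.
Variable (Delta : U -> T).
Hypothesis hD : is_coproduct sq E F G f tens Delta.

Local Notation Ki := (Kinv sq f).
Local Notation Kp := (K sq f).

Lemma tens0l z : tens 0 z = 0.
Proof.
have := tens_linl hT 1 0 0 z; rewrite !scale1r addr0 => /eqP.
by rewrite -subr_eq subrr eq_sym => /eqP.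
Qed.
Lemma tens0r z : tens z 0 = 0.
Proof.
have := tens_linr hT 1 0 0 z; rewrite !scale1r addr0 => /eqP.
by rewrite -subr_eq subrr eq_sym => /eqP.
Qed.
Lemma tensZl a x z : tens (a *: x) z = a *: tens x z.
Proof. by rewrite -[a *: x]addr0 (tens_linl hT) tens0l addr0. Qed.
Lemma tensZr a x z : tens z (a *: x) = a *: tens z x.
Proof. by rewrite -[a *: x]addr0 (tens_linr hT) tens0r addr0. Qed.
Lemma tensDl x y z : tens (x + y) z = tens x z + tens y z.
Proof. by have := tens_linl hT 1 x y z; rewrite !scale1r. Qed.
Lemma tensDr x y z : tens z (x + y) = tens z x + tens z y.
Proof. by have := tens_linr hT 1 x y z; rewrite !scale1r. Qed.
Lemma tens_suml (J : Type) (s : seq J) (P : pred J) (Fv : J -> U) z :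
  tens (\sum_(j <- s | P j) Fv j) z = \sum_(j <- s | P j) tens (Fv j) z.
Proof.
elim: s => [|j s IH]; first by rewrite !big_nil tens0l.
by rewrite !big_cons; case: (P j); rewrite ?tensDl IH.
Qed.
Lemma tens_sumr (J : Type) (s : seq J) (P : pred J) (Fv : J -> U) z :
  tens z (\sum_(j <- s | P j) Fv j) = \sum_(j <- s | P j) tens z (Fv j).
Proof.
elim: s => [|j s IH]; first by rewrite !big_nil tens0r.
by rewrite !big_cons; case: (P j); rewrite ?tensDr IH.
Qed.

Lemma Delta0 : Delta 0 = 0.
Proof.
have := Delta_lin hD 1 0 0; rewrite !scale1r addr0 => /eqP.
by rewrite -subr_eq subrr eq_sym => /eqP.
Qed.
Lemma DeltaZ a x : Delta (a *: x) = a *: Delta x.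
Proof. by rewrite -[a *: x]addr0 (Delta_lin hD) Delta0 addr0. Qed.
Lemma DeltaD x y : Delta (x + y) = Delta x + Delta y.
Proof. by have := Delta_lin hD 1 x y; rewrite !scale1r. Qed.
Lemma Delta_sum (J : Type) (s : seq J) (P : pred J) (Fv : J -> U) :
  Delta (\sum_(j <- s | P j) Fv j) = \sum_(j <- s | P j) Delta (Fv j).
Proof.
elim: s => [|j s IH]; first by rewrite !big_nil Delta0.
by rewrite !big_cons; case: (P j); rewrite ?DeltaD IH.
Qed.

Lemma q0 : q != 0. Proof. exact: q_neq0. Qed.
Lemma sq0 : sq != 0.
Proof. by apply/negP => /eqP h; move: q0; rewrite -hsq h expr2 mul0r eqxx. Qed.

Lemma fM a b : a != 0 -> b != 0 -> f a * f b = f (a * b).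
Proof. exact: (U_fmul hU). Qed.
Lemma fC a b : a != 0 -> b != 0 -> f a * f b = f b * f a.
Proof. by move=> a0 b0; rewrite !fM // mulrC. Qed.

Lemma KiF : Ki * F = q *: (F * Ki).
Proof.
rewrite /Kinv (U_fF hU) ?invr_eq0 ?sq0 //.
by rewrite -exprVn invrK hsq.
Qed.
Lemma KiE : E * Ki = q *: (Ki * E).
Proof.
rewrite /Kinv (U_fE hU) ?invr_eq0 ?sq0 // scalerA exprVn.
by rewrite hsq mulfV ?q0 // scale1r.
Qed.
Lemma KKi : Kp * Ki = 1.
Proof. by rewrite /K /Kinv fM ?invr_eq0 ?sq0 // mulfV ?sq0 // (U_f1 hU). Qed.
Lemma KiK : Ki * Kp = 1.
Proof. by rewrite /K /Kinv fM ?invr_eq0 ?sq0 // mulVf ?sq0 // (U_f1 hU). Qed.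
Lemma KiKi : Ki * Ki = f q^-1.
Proof. by rewrite /Kinv fM ?invr_eq0 ?sq0 // -invfM -expr2 hsq. Qed.
Lemma KiC a : a != 0 -> f a * Ki = Ki * f a.
Proof. by move=> a0; rewrite /Kinv fC ?invr_eq0 ?sq0. Qed.

Lemma KinF n : Ki ^+ n * F = q ^+ n *: (F * Ki ^+ n).
Proof.
elim: n => [|n IH]; first by rewrite !expr0 mul1r mulr1 scale1r.
rewrite exprS -mulrA IH -scalerAr mulrA KiF -scalerAl -mulrA -exprS.
by rewrite scalerA -exprSr.
Qed.
Lemma EKin n : E * Ki ^+ n = q ^+ n *: (Ki ^+ n * E).
Proof.
elim: n => [|n IH]; first by rewrite !expr0 mul1r mulr1 scale1r.
rewrite exprSr mulrA IH -scalerAl -[Ki ^+ n * E * Ki]mulrA KiE -scalerAr scalerA mulrA -exprSr.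
by rewrite -exprSr.
Qed.


Lemma qfactS n : qfact q n.+1 = qfact q n * qint q n.+1.
Proof. by rewrite /qfact big_nat_recr. Qed.

Lemma H3F n : Fdiv q sq F f n * (F * Ki) = (q ^+ n * qint q n.+1) *: Fdiv q sq F f n.+1.
Proof.
rewrite /Fdiv -scalerAl scalerA qfactS invfM.
have -> : F ^+ n * Ki ^+ n * (F * Ki) = q ^+ n *: (F ^+ n.+1 * Ki ^+ n.+1).
  rewrite mulrA -(mulrA (F ^+ n)) KinF -scalerAr -scalerAl; congr (_ *: _).
  by rewrite !mulrA -exprSr -mulrA -exprSr.
rewrite scalerA; congr (_ *: _).
have := qint_neq0 hq n; set a := qint q n.+1 => a0.
by rewrite mulrAC -mulrA divfK // mulrC.
Qed.

Lemma H3E n : (Ki * E) * Ediv q sq E f n = (q ^+ n * qint q n.+1) *: Ediv q sq E f n.+1.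
Proof.
rewrite /Ediv -scalerAr scalerA qfactS invfM.
have -> : Ki * E * (Ki ^+ n * E ^+ n) = q ^+ n *: (Ki ^+ n.+1 * E ^+ n.+1).
  rewrite -mulrA (mulrA E) EKin -scalerAl -scalerAr; congr (_ *: _).
  by rewrite !mulrA -exprS -mulrA -exprS.
rewrite scalerA; congr (_ *: _).
have := qint_neq0 hq n; set a := qint q n.+1 => a0.
by rewrite mulrAC -mulrA divfK // mulrC.
Qed.

Lemma H3G n : G * Gdiv G n = (n.+1)%:R *: Gdiv G n.+1.
Proof.
rewrite /Gdiv -scalerAr scalerA -exprS; congr (_ *: _).
by rewrite factS natrM invfM mulrA mulfV ?mul1r // pnatr_eq0.
Qed.
Lemma H3G' n : Gdiv G n * G = (n.+1)%:R *: Gdiv G n.+1.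
Proof. by rewrite /Gdiv -scalerAl -exprSr -H3G /Gdiv -scalerAr -exprS. Qed.


Lemma fFK a : a != 0 -> f a * (F * Ki) = a ^- 2 *: (F * Ki * f a).
Proof.
move=> a0; rewrite mulrA (U_fF hU) // -scalerAl -!mulrA KiC //.
Qed.

Lemma KEf a : a != 0 -> (Ki * E) * f a = a ^- 2 *: (f a * (Ki * E)).
Proof.
move=> a0.
have h : E * f a = a ^- 2 *: (f a * E).
  rewrite (U_fE hU) // scalerA mulVf ?scale1r // expf_neq0 //.
rewrite -mulrA h -scalerAr mulrA -KiC // -mulrA //.
Qed.

Lemma Dfi : Delta Ki = tens Ki Ki.
Proof. by rewrite /Kinv (Delta_f hD) // invr_eq0 sq0. Qed.

Lemma DFK : Delta (F * Ki) = tens (F * Ki) 1 + tens (f q^-1) (F * Ki).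
Proof.
rewrite (Delta_mul hD) (Delta_F hD) Dfi mulrDl !(tens_mul hT).
by rewrite KKi KiKi.
Qed.

Lemma DKE : Delta (Ki * E) = tens (Ki * E) 1 + tens (f q^-1) (Ki * E).
Proof.
rewrite (Delta_mul hD) (Delta_E hD) Dfi mulrDr !(tens_mul hT).
by rewrite KiK KiKi.
Qed.


Local Notation Fd := (Fdiv q sq F f).
Local Notation Ed := (Ediv q sq E f).
Local Notation Gd := (Gdiv G).

Lemma qfact0 : qfact q 0 = 1.
Proof. by rewrite /qfact big_geq. Qed.
Lemma Fd0 : Fd 0 = 1.
Proof. by rewrite /Fdiv qfact0 invr1 scale1r !expr0 mulr1. Qed.
Lemma Ed0 : Ed 0 = 1.
Proof. by rewrite /Ediv qfact0 invr1 scale1r !expr0 mulr1. Qed.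
Lemma Gd0 : Gd 0 = 1.
Proof. by rewrite /Gdiv fact0 invr1 scale1r !expr0. Qed.

Lemma qinv_neq0 r : q ^- r != 0.
Proof. by rewrite invr_eq0 expf_neq0 // q0. Qed.
Lemma qinvS r : q ^- r * q^-1 = q ^- r.+1.
Proof. by rewrite exprSr invfM. Qed.
Lemma qinvS' r : q^-1 * q ^- r = q ^- r.+1.
Proof. by rewrite mulrC qinvS. Qed.

Lemma N_neq0 i : q ^+ i * qint q i.+1 != 0.
Proof. by rewrite mulf_neq0 ?expf_neq0 ?q0 ?qint_neq0. Qed.

Lemma DF i : Delta (Fd i) = \sum_(r < i.+1) tens (Fd (i - r) * f (q ^- r)) (Fd r).
Proof.
elim: i => [|i IH].
  by rewrite big_ord1 /= Fd0 expr0 invr1 (U_f1 hU) mulr1 (Delta_one hD) (tens_one hT).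
have e : Fd i.+1 = (q ^+ i * qint q i.+1)^-1 *: (Fd i * (F * Ki)).
  by rewrite H3F scalerA mulVf ?scale1r // N_neq0.
pose A r := (q ^- r) ^- 2 * (q ^+ (i - r) * qint q (i - r).+1).
pose B r := q ^+ r * qint q r.+1.
pose Tm r := tens (Fd (i.+1 - r) * f (q ^- r)) (Fd r).
rewrite e DeltaZ (Delta_mul hD) IH DFK mulr_suml.
rewrite (eq_bigr (fun r : 'I_i.+1 => A r *: Tm r + B r *: Tm r.+1)); last first.
  move=> r _; rewrite mulrDr !(tens_mul hT) mulr1.
  have ri : (r <= i)%N by rewrite -ltnS ltn_ord.
  congr (_ + _).
    rewrite -mulrA fFK ?qinv_neq0 // -scalerAr mulrA H3F -scalerAl !tensZl scalerA.
    by rewrite /Tm subSn.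
  by rewrite -mulrA fM ?qinv_neq0 ?invr_eq0 ?q0 // qinvS H3F tensZr /Tm subSS.
rewrite (@comb R T Tm A B (q ^+ i * qint q i.+1) i) ?scalerA ?mulVf ?scale1r ?N_neq0 //.
  by rewrite /A expr0 invr1 expr1n invr1 mul1r subn0.
move=> r ri; rewrite /A /B.
have [m ->] : exists m, i = (r + m).+1 by exists (i - r.+1)%N; lia.
have -> : ((r + m).+1 - r.+1 = m)%N by lia.
by rewrite comb_id.
Qed.


Lemma DE i : Delta (Ed i) = \sum_(r < i.+1) tens (f (q ^- r) * Ed (i - r)) (Ed r).
Proof.
elim: i => [|i IH].
  by rewrite big_ord1 /= Ed0 expr0 invr1 (U_f1 hU) mulr1 (Delta_one hD) (tens_one hT).
have e : Ed i.+1 = (q ^+ i * qint q i.+1)^-1 *: ((Ki * E) * Ed i).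
  by rewrite H3E scalerA mulVf ?scale1r // N_neq0.
pose A r := (q ^- r) ^- 2 * (q ^+ (i - r) * qint q (i - r).+1).
pose B r := q ^+ r * qint q r.+1.
pose Tm r := tens (f (q ^- r) * Ed (i.+1 - r)) (Ed r).
rewrite e DeltaZ (Delta_mul hD) IH DKE mulr_sumr.
rewrite (eq_bigr (fun r : 'I_i.+1 => A r *: Tm r + B r *: Tm r.+1)); last first.
  move=> r _; rewrite mulrDl !(tens_mul hT) mul1r.
  have ri : (r <= i)%N by rewrite -ltnS ltn_ord.
  congr (_ + _).
    rewrite mulrA KEf ?qinv_neq0 // -scalerAl -mulrA H3E -scalerAr !tensZl scalerA.
    by rewrite /Tm subSn.
  by rewrite mulrA fM ?qinv_neq0 ?invr_eq0 ?q0 // qinvS' H3E tensZr /Tm subSS.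
rewrite (@comb R T Tm A B (q ^+ i * qint q i.+1) i) ?scalerA ?mulVf ?scale1r ?N_neq0 //.
  by rewrite /A expr0 invr1 expr1n invr1 mul1r subn0.
move=> r ri; rewrite /A /B.
have [m ->] : exists m, i = (r + m).+1 by exists (i - r.+1)%N; lia.
have -> : ((r + m).+1 - r.+1 = m)%N by lia.
by rewrite comb_id.
Qed.

Lemma DG i : Delta (Gd i) = \sum_(r < i.+1) tens (Gd (i - r)) (Gd r).
Proof.
elim: i => [|i IH].
  by rewrite big_ord1 /= Gd0 (Delta_one hD) (tens_one hT).
have e : Gd i.+1 = (i.+1%:R)^-1 *: (G * Gd i).
  by rewrite H3G scalerA mulVf ?scale1r // pnatr_eq0.
pose A r := ((i - r).+1)%:R : R[i].
pose B r := (r.+1)%:R : R[i].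
pose Tm r := tens (Gd (i.+1 - r)) (Gd r).
rewrite e DeltaZ (Delta_mul hD) IH (Delta_G hD) mulr_sumr.
rewrite (eq_bigr (fun r : 'I_i.+1 => A r *: Tm r + B r *: Tm r.+1)); last first.
  move=> r _; rewrite mulrDl !(tens_mul hT) !mul1r.
  have ri : (r <= i)%N by rewrite -ltnS ltn_ord.
  rewrite addrC; congr (_ + _).
    by rewrite H3G tensZl /Tm subSn.
  by rewrite H3G tensZr /Tm subSS.
rewrite (@comb R T Tm A B (i.+1%:R) i) ?scalerA ?mulVf ?scale1r ?pnatr_eq0 //.
  by rewrite /A subn0.
move=> r ri; rewrite /A /B -natrD; congr (_%:R); lia.
Qed.


Local Notation pb := (pbw q sq E F G f).

Lemma widen_sum (W : nmodType) n N (H : nat -> W) : (n < N)%N ->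
  \sum_(r < n.+1) H r = \sum_(r < N) (if (r <= n)%N then H r else 0).
Proof.
move=> nN; rewrite (big_ord_widen N) // big_mkcond.
by apply: eq_bigr => r _; rewrite ltnS.
Qed.

Lemma Dpbw N i nu j k : nu != 0 -> (i < N)%N -> (j < N)%N -> (k < N)%N ->
  Delta (pb (i, nu, j, k)) = \sum_(r < N) \sum_(s < N) \sum_(t < N)
    (if [&& (r <= i), (s <= j) & (t <= k)]%N then
       tens (pb ((i - r)%N, q ^- (r + s)%N * nu, (j - s)%N, (k - t)%N)) (pb (r : nat, nu, s : nat, t : nat))
     else 0).
Proof.
move=> nu0 iN jN kN.
rewrite /pbw /= !(Delta_mul hD) DF DE DG (Delta_f hD nu0).
rewrite (widen_sum (fun r => tens (Fd (i - r) * f (q ^- r)) (Fd r)) iN) (widen_sum (fun r => tens (f (q ^- r) * Ed (j - r)) (Ed r)) jN) (widen_sum (fun r => tens (Gd (k - r)) (Gd r)) kN).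
rewrite !mulr_suml; apply: eq_bigr => r _.
rewrite [_ * tens (f nu) (f nu) * _]mulr_sumr mulr_suml; apply: eq_bigr => s _.
rewrite mulr_sumr; apply: eq_bigr => t _.
case: (r <= i)%N; last by rewrite !mul0r.
case: (s <= j)%N; last by rewrite !(mul0r, mulr0).
case: (t <= k)%N; last by rewrite !(mul0r, mulr0).
rewrite /= !(tens_mul hT); congr (tens _ _).
rewrite -!mulrA; congr (_ * _); rewrite !mulrA; congr (_ * _ * _).
rewrite !fM ?qinv_neq0 ?mulf_neq0 ?qinv_neq0 //.
by rewrite exprD invfM mulrAC.
Qed.

End Alg.


Lemma L0 (W : nmodType) (b : bool) n (H : 'I_n -> W) :
  \sum_(r < n) (if b then H r else 0) = if b then \sum_(r < n) H r else 0.
Proof. by case: b => //; rewrite big1. Qed.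

Lemma L1 (W : nmodType) n r (H : nat -> W) :
  \sum_(r' < n) (if (r' == r :> nat) then H r' else 0) = if (r < n)%N then H r else 0.
Proof.
case: ltnP => rn.
  rewrite (bigD1 (Ordinal rn)) //= eqxx big1 ?addr0 // => i.
  by rewrite -val_eqE /= => /negPf ->.
by rewrite big1 // => i _; case: eqP => // ei; move: (ltn_ord i); rewrite ei ltnNge rn.
Qed.

Lemma L1c (W : nmodType) n r (Z : W) :
  \sum_(r' < n) (if (r' == r :> nat) then Z else 0) = if (r < n)%N then Z else 0.
Proof. exact: (L1 _ _ (fun _ => Z)). Qed.

Lemma ex4 (W : nmodType) (J : Type) N (l : seq J) (H : 'I_N -> 'I_N -> 'I_N -> J -> W) :
  \sum_(r < N) \sum_(s < N) \sum_(t < N) \sum_(x <- l) H r s t x =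
  \sum_(x <- l) \sum_(r < N) \sum_(s < N) \sum_(t < N) H r s t x.
Proof.
transitivity (\sum_(r < N) \sum_(s < N) \sum_(x <- l) \sum_(t < N) H r s t x).
  by apply: eq_bigr => r _; apply: eq_bigr => s _; apply: exchange_big.
transitivity (\sum_(r < N) \sum_(x <- l) \sum_(s < N) \sum_(t < N) H r s t x).
  by apply: eq_bigr => r _; apply: exchange_big.
exact: exchange_big.
Qed.

Lemma L3 (W : nmodType) N r s t (Z : W) :
  \sum_(r' < N) \sum_(s' < N) \sum_(t' < N)
    (if (r' == r :> nat) then if (s' == s :> nat) then if (t' == t :> nat) then Z else 0 else 0 else 0)
  = if [&& (r < N)%N, (s < N)%N & (t < N)%N] then Z else 0.
Proof.
under eq_bigr => r' _ do under eq_bigr => s' _ do rewrite L0 L0.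
under eq_bigr => r' _ do rewrite L0.
rewrite L1c.
under eq_bigr => r' _ do rewrite L1c.
rewrite L1c.
by case: (r < N)%N; case: (s < N)%N; case: (t < N)%N.
Qed.

Lemma subspaceZ (R : realType) (U : algType R[i]) (Y : U -> Prop) a y :
  subspace Y -> Y y -> Y (a *: y).
Proof. by move=> [h0 h] hy; rewrite -[a *: y]addr0; apply: h. Qed.
Lemma subspaceD (R : realType) (U : algType R[i]) (Y : U -> Prop) x y :
  subspace Y -> Y x -> Y y -> Y (x + y).
Proof. by move=> [h0 h] hx hy; rewrite -[x]scale1r; apply: h. Qed.
Lemma subspace_sum (R : realType) (U : algType R[i]) (Y : U -> Prop) (J : eqType)
  (s : seq J) (Fv : J -> U) :
  subspace Y -> (forall x, x \in s -> Y (Fv x)) -> Y (\sum_(x <- s) Fv x).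
Proof.
move=> hY; elim: s => [|x s IH] hs; first by rewrite big_nil; case: hY.
rewrite big_cons; apply: subspaceD => //; first by apply: hs; rewrite inE eqxx.
by apply: IH => z hz; apply: hs; rewrite inE hz orbT.
Qed.

Lemma span_pairs (R : realType) (I : eqType) (V : lmodType R[i]) (P : I -> Prop)
  (b : I -> V) v :
  span_of P b v <-> exists S : seq (I * R[i]),
    (forall p, p \in S -> P p.1) /\ v = \sum_(p <- S) p.2 *: b p.1.
Proof.
split.
  move=> [s [c [hs ->]]]; exists (map (fun j => (j, c j)) s); split.
    by move=> p /mapP[j hj ->]; apply: hs.
  by rewrite big_map.
move=> [S [hS ->]]; exists (undup (map fst S)), (fun i => \sum_(p <- S | p.1 == i) p.2); split.
  by move=> i; rewrite mem_undup => /mapP[p hp ->]; apply: hS.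
rewrite (sumA b (undup_uniq _)) // => p hp; rewrite mem_undup; exact: (map_f _ hp).
Qed.

Lemma span_subspace (R : realType) (I : eqType) (U : algType R[i]) (P : I -> Prop)
  (b : I -> U) : subspace (span_of P b).
Proof.
split; first by exists [::], (fun _ => 0); split => //; rewrite big_nil.
move=> a x y /span_pairs [S1 [h1 ->]] /span_pairs [S2 [h2 ->]].
apply/span_pairs; exists ([seq (p.1, a * p.2) | p <- S1] ++ S2); split.
  move=> z; rewrite mem_cat => /orP[|]; last exact: h2.
  by move=> hz; have [p1 hp1 ep] := mapP hz; rewrite ep /=; apply: (h1 p1 hp1).
rewrite big_cat big_map scaler_sumr; congr (_ + _).
by apply: eq_bigr => p _; rewrite scalerA.
Qed.

Section Main.
Variables (R : realType) (q sq : R[i]) (hq : transcendental q) (hsq : sq ^+ 2 = q).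
Variables (U : algType R[i]) (E F G : U) (f : R[i] -> U).
Hypothesis hU : is_U q sq E F G f.
Variables (T : algType R[i]) (tens : U -> U -> T).
Hypothesis hT : is_tensor_square q sq E F G f tens.
Variable (Delta : U -> T).
Hypothesis hD : is_coproduct sq E F G f tens Delta.

Local Notation pb := (pbw q sq E F G f).

Definition wb (b : pbw_index R) (p : pbw_index R * pbw_index R) : U :=
  if p.2 == b then pb p.1 else 0.
Definition Psi b (t : T) : U := psi (tens_basis hT) (wb b) t.

Lemma Psi_tens_pbw b b' y : pbw_ok b' -> Psi b (tens y (pb b')) = if b' == b then y else 0.
Proof.
move=> ok'.
have [s [c [hs ->]]] := (U_pbw hU).1 y.
rewrite (tens_suml hT).
under eq_bigr do rewrite (tensZl hT).
have -> : \sum_(i <- s) c i *: tens (pb i) (pb b') =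
   \sum_(p <- [seq ((a, b'), c a) | a <- s]) p.2 *: tens (pb p.1.1) (pb p.1.2).
  by rewrite big_map.
rewrite /Psi psi_rep; last by move=> p /mapP[a ha ->] /=; split => //; apply: hs.
rewrite big_map /wb /=.
case: (b' == b); first by [].
by rewrite big1 // => a _; rewrite scaler0.
Qed.


Lemma Psi_lin b a x y : Psi b (a *: x + y) = a *: Psi b x + Psi b y.
Proof. exact: psi_lin. Qed.
Lemma Psi0 b : Psi b 0 = 0.
Proof. exact: psi0. Qed.
Lemma PsiZ b a x : Psi b (a *: x) = a *: Psi b x.
Proof. exact: psiZ. Qed.
Lemma Psi_sum b (J : Type) (s : seq J) (Fv : J -> T) :
  Psi b (\sum_(j <- s) Fv j) = \sum_(j <- s) Psi b (Fv j).
Proof. exact: psi_sum. Qed.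
Lemma Psi_if b (c : bool) x : Psi b (if c then x else 0) = if c then Psi b x else 0.
Proof. by case: c; rewrite ?Psi0. Qed.

Lemma Psi_tens b y u : exists k, Psi b (tens y u) = k *: y.
Proof.
have [s [d [hs ->]]] := (U_pbw hU).1 u.
rewrite (tens_sumr hT) Psi_sum.
exists (\sum_(b' <- s) d b' * (if b' == b then 1 else 0)).
rewrite scaler_suml; apply: eq_big_seq => b' hb'.
rewrite (tensZr hT) PsiZ Psi_tens_pbw; last exact: hs.
by case: (b' == b); rewrite ?mulr1 ?mulr0 ?scale0r ?scaler0.
Qed.

Definition bnd (l : seq (pbw_index R)) : nat :=
  (\max_(x <- l) (x.1.1.1 + x.1.2 + x.2)%N).+1.

Lemma bndP l x : x \in l -> [/\ (x.1.1.1 < bnd l)%N, (x.1.2 < bnd l)%N & (x.2 < bnd l)%N].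
Proof.
move=> xl; have := @leq_bigmax_seq _ l predT (fun x : pbw_index R => (x.1.1.1 + x.1.2 + x.2)%N) x xl isT.
rewrite /bnd; set M := \max_(_ <- _) _ => /= h; split; lia.
Qed.

Lemma point_eq (W : nmodType) (i j k r s t r' s' t' : nat) (nu mu : R[i]) (V : W) (V' : W) :
  ((r' == r) && (s' == s) && (t' == t) -> V = V') ->
  (if [&& (r' <= i)%N, (s' <= j)%N & (t' <= k)%N] then
     (if (r', nu, s', t') == (r, mu, s, t) then V else 0) else 0) =
  if r' == r then if s' == s then if t' == t then
     (if [&& nu == mu, (r <= i)%N, (s <= j)%N & (t <= k)%N] then V' else 0) else 0 else 0 else 0.
Proof.
move=> hV; rewrite !xpair_eqE.
case: (eqVneq r' r) => [er|ne]; last by rewrite /= ?andbF; case: ifP.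
case: (eqVneq s' s) => [es|ne]; last by rewrite /= ?andbF; case: ifP.
case: (eqVneq t' t) => [et|ne]; last by rewrite /= ?andbF; case: ifP.
subst => /=; rewrite hV ?eqxx // !andbT.
by case: (nu == mu); case: (r <= i)%N; case: (s <= j)%N; case: (t <= k)%N.
Qed.

Lemma key l alpha r mu s t : (forall x, x \in l -> pbw_ok x) ->
  Psi (r, mu, s, t) (Delta (\sum_(x <- l) alpha x *: pb x)) =
  Xrmst q sq E F G f l alpha r mu s t.
Proof.
move=> hok.
rewrite (Delta_sum hD) Psi_sum /Xrmst [RHS]big_mkcond; apply: eq_big_seq => x xl.
have [iN jN kN] := bndP xl; have nu0 := hok x xl.
move: x xl iN jN kN nu0 => [[[i nu] j] k] /= xl iN jN kN nu0.
rewrite (DeltaZ hD) PsiZ (Dpbw hq hsq hU hT hD nu0 iN jN kN).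
set N := bnd l.
rewrite Psi_sum.
under eq_bigr => r' _ do (rewrite Psi_sum; under eq_bigr => s' _ do rewrite Psi_sum).
under eq_bigr => r' _ do under eq_bigr => s' _ do under eq_bigr => t' _ do
  rewrite Psi_if Psi_tens_pbw //.
rewrite /=.
have pe := fun r' s' t' => @point_eq _ i j k r s t r' s' t' nu mu
  (pb ((i - r')%N, q ^- (r' + s') * nu, (j - s')%N, (k - t')%N))
  (pb ((i - r)%N, q ^- (r + s) * nu, (j - s)%N, (k - t)%N))
  (fun h => ltac:(by case/andP: h => /andP[/eqP -> /eqP ->] /eqP ->)).
under eq_bigr => r' _ do under eq_bigr => s' _ do under eq_bigr => t' _ do
  rewrite pe.
rewrite L3.
case: (eqVneq nu mu) => [<-|ne] /=; last by case: ifP; rewrite ?scaler0.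
case: (leqP r i) => ri /=; last by case: ifP; rewrite ?scaler0.
case: (leqP s j) => sj /=; last by case: ifP; rewrite ?andbF ?scaler0.
case: (leqP t k) => tk /=; last by case: ifP; rewrite ?andbF ?scaler0.
by rewrite (leq_ltn_trans ri iN) (leq_ltn_trans sj jN) (leq_ltn_trans tk kN).
Qed.


Lemma part1 (Y : U -> Prop) l alpha X : right_coideal tens Delta Y -> Y X ->
  (forall x, x \in l -> pbw_ok x) -> X = \sum_(x <- l) alpha x *: pb x ->
  forall r mu s t, Y (Xrmst q sq E F G f l alpha r mu s t).
Proof.
move=> [hY hc] hX hok hXl r mu s t.
rewrite -key // -hXl.
have [S [hS ->]] := hc X hX.
rewrite Psi_sum; apply: subspace_sum => // p hp.
have [k ->] := Psi_tens (r, mu, s, t) p.1 p.2.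
by apply: subspaceZ => //; apply: hS.
Qed.

Lemma txu0 (Y : U -> Prop) : tensor_XU tens Y 0.
Proof. by exists [::]; split => //; rewrite big_nil. Qed.
Lemma txuD (Y : U -> Prop) t1 t2 : tensor_XU tens Y t1 -> tensor_XU tens Y t2 ->
  tensor_XU tens Y (t1 + t2).
Proof.
move=> [S1 [h1 ->]] [S2 [h2 ->]]; exists (S1 ++ S2); split; last by rewrite big_cat.
by move=> p; rewrite mem_cat => /orP[]; [apply: h1|apply: h2].
Qed.
Lemma txuZ (Y : U -> Prop) a t : subspace Y -> tensor_XU tens Y t ->
  tensor_XU tens Y (a *: t).
Proof.
move=> hY [S [h ->]]; exists [seq (a *: p.1, p.2) | p <- S]; split.
  by move=> p /mapP[p' hp' ->] /=; apply: subspaceZ => //; apply: h.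
by rewrite big_map scaler_sumr; apply: eq_bigr => p _ /=; rewrite (tensZl hT).
Qed.
Lemma txu1 (Y : U -> Prop) y z : Y y -> tensor_XU tens Y (tens y z).
Proof.
by move=> hy; exists [:: (y, z)]; split; [move=> p; rewrite inE => /eqP -> | rewrite big_seq1].
Qed.
Lemma txu_sum_in (Y : U -> Prop) (J : eqType) (s : seq J) (Fv : J -> T) :
  (forall j, j \in s -> tensor_XU tens Y (Fv j)) -> tensor_XU tens Y (\sum_(j <- s) Fv j).
Proof.
elim: s => [|j s IH] h; first by rewrite big_nil; apply: txu0.
rewrite big_cons; apply: txuD; first by apply: h; rewrite inE eqxx.
by apply: IH => z hz; apply: h; rewrite inE hz orbT.
Qed.
Lemma txu_sum (Y : U -> Prop) (J : Type) (s : seq J) (Fv : J -> T) :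
  (forall j, tensor_XU tens Y (Fv j)) -> tensor_XU tens Y (\sum_(j <- s) Fv j).
Proof.
move=> h; elim: s => [|j s IH]; first by rewrite big_nil; apply: txu0.
by rewrite big_cons; apply: txuD.
Qed.


Lemma tens_sum3 N (J : Type) (l : seq J) (P : 'I_N -> 'I_N -> 'I_N -> pred J)
  (g : 'I_N -> 'I_N -> 'I_N -> J -> U) (z : 'I_N -> 'I_N -> 'I_N -> U) :
  \sum_(r < N) \sum_(s < N) \sum_(t < N) tens (\sum_(x <- l | P r s t x) g r s t x) (z r s t) =
  \sum_(r < N) \sum_(s < N) \sum_(t < N) \sum_(x <- l)
     (if P r s t x then tens (g r s t x) (z r s t) else 0).
Proof.
apply: eq_bigr => r _; apply: eq_bigr => s _; apply: eq_bigr => t _.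
by rewrite (tens_suml hT) big_mkcond.
Qed.

Lemma DX l alpha r mu s t : (forall x, x \in l -> pbw_ok x) ->
  Delta (Xrmst q sq E F G f l alpha r mu s t) =
  \sum_(r' < bnd l) \sum_(s' < bnd l) \sum_(t' < bnd l)
     tens (Xrmst q sq E F G f l alpha (r + r') mu (s + s') (t + t'))
          (pb (r' : nat, q ^- (r + s)%N * mu, s' : nat, t' : nat)).
Proof.
move=> hok; set N := bnd l.
rewrite /Xrmst (Delta_sum hD) big_mkcond; symmetry.
rewrite tens_sum3 ex4; symmetry.
apply: eq_big_seq => x xl.
have [iN jN kN] := bndP xl; have nu0 := hok x xl.
move: x xl iN jN kN nu0 => [[[i nu] j] k] /= xl iN jN kN nu0.
case: (eqVneq nu mu) => [enu|ne] /=; last by rewrite !big1_eq.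
subst mu.
case c0: ((r <= i) && (s <= j) && (t <= k))%N; last first.
  rewrite big1 // => r0 _; rewrite big1 // => s0 _; rewrite big1 // => t0 _.
  case: ifP => // h; exfalso; move/negbT: c0; move: h; rewrite /=; lia.
have nu1 : q ^- (r + s) * nu != 0 by rewrite mulf_neq0 ?qinv_neq0.
have iN' : (i - r < N)%N by rewrite /N; lia.
have jN' : (j - s < N)%N by rewrite /N; lia.
have kN' : (k - t < N)%N by rewrite /N; lia.
rewrite (DeltaZ hD) (Dpbw hq hsq hU hT hD nu1 iN' jN' kN').
rewrite scaler_sumr; apply: eq_bigr => r0 _; rewrite scaler_sumr; apply: eq_bigr => s0 _.
rewrite scaler_sumr; apply: eq_bigr => t0 _.
have -> : [&& (r0 <= i - r)%N, (s0 <= j - s)%N & (t0 <= k - t)%N] =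
  [&& (r + r0 <= i)%N, (s + s0 <= j)%N & (t + t0 <= k)%N].
  move: c0; rewrite /=; case/andP => /andP[h1 h2] h3.
  apply/idP/idP; case/and3P => g1 g2 g3; apply/and3P; split; lia.
rewrite /=.
rewrite andbA; case: ifP => _; last by rewrite scaler0.
rewrite (tensZl hT); congr (_ *: tens (pb _) _).
rewrite !subnDA; congr (_, _, _, _).
rewrite mulrA -invfM -exprD; congr (_ ^- _ * _); lia.
Qed.


Definition Lin l alpha := span_of (fun p : nat * R[i] * nat * nat => p.1.1.2 != 0)
   (fun p => Xrmst q sq E F G f l alpha p.1.1.1 p.1.1.2 p.1.2 p.2).

Lemma Lin_X l alpha r mu s t : mu != 0 -> Lin l alpha (Xrmst q sq E F G f l alpha r mu s t).
Proof.
move=> mu0; exists [:: (r, mu, s, t)], (fun _ => 1); split.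
  by move=> p; rewrite inE => /eqP ->.
by rewrite big_seq1 scale1r.
Qed.

Lemma Lin_coideal l alpha : (forall x, x \in l -> pbw_ok x) ->
  right_coideal tens Delta (Lin l alpha).
Proof.
move=> hok; have hs := span_subspace (fun p : nat * R[i] * nat * nat => p.1.1.2 != 0)
   (fun p => Xrmst q sq E F G f l alpha p.1.1.1 p.1.1.2 p.1.2 p.2).
split => // v /span_pairs [S [hS ->]].
rewrite (Delta_sum hD); apply: txu_sum_in => p hp.
rewrite (DeltaZ hD); apply: txuZ => //.
have := hS p hp; move: p hp => [[[[r mu] s] t] c] /= hp mu0.
rewrite DX //; apply: txu_sum => r'; apply: txu_sum => s'; apply: txu_sum => t'.
by apply: txu1; apply: Lin_X.
Qed.

Lemma Lin_has_X l alpha X : (forall x, x \in l -> pbw_ok x) ->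
  X = \sum_(x <- l) alpha x *: pb x -> Lin l alpha X.
Proof.
move=> hok ->.
set u := undup [seq x.1.1.2 | x <- l].
exists [seq (0%N, mu, 0%N, 0%N) | mu <- u], (fun _ => 1); split.
  move=> p /mapP[mu]; rewrite mem_undup => /mapP[x xl ->] -> /=.
  exact: hok.
rewrite big_map /=.
rewrite -(@part_sum _ _ _ (fun x : pbw_index R => x.1.1.2) u) ?undup_uniq //; last first.
  by move=> x xl; rewrite mem_undup; apply: map_f.
apply: eq_bigr => mu _; rewrite scale1r /Xrmst.
apply: eq_big => [x|x]; first by rewrite /= !leq0n !andbT.
rewrite /= ?leq0n ?andbT => /eqP <-.
by rewrite !subn0 addn0 expr0 invr1 mul1r; case: x => [[[]]].
Qed.

Theorem final
  (Xc : U -> Prop) (hXc : right_coideal tens Delta Xc)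
  (X : U) (hX : Xc X)
  (l : seq (pbw_index R)) (alpha : pbw_index R -> R[i])
  (hl_uniq : uniq l) (hl_ok : forall x, x \in l -> pbw_ok x)
  (hXl : X = \sum_(x <- l) alpha x *: pbw q sq E F G f x) :
  (forall (r : nat) (mu : R[i]) (s t : nat), mu != 0 ->
      Xc (Xrmst q sq E F G f l alpha r mu s t)) /\
  (let Lin := span_of (fun p : nat * R[i] * nat * nat => p.1.1.2 != 0)
                (fun p => Xrmst q sq E F G f l alpha p.1.1.1 p.1.1.2 p.1.2 p.2) in
   [/\ right_coideal tens Delta Lin, Lin X &
       forall Y : U -> Prop, right_coideal tens Delta Y -> Y X ->
         forall y, Lin y -> Y y]).
Proof.
split; first by move=> r mu s t _; apply: (part1 hXc hX hl_ok hXl).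
split; first exact: Lin_coideal.
  exact: Lin_has_X.
move=> Y hY hYX y /span_pairs [S [hS ->]].
apply: subspace_sum; first by case: hY.
move=> p hp; apply: subspaceZ; first by case: hY.
exact: (part1 hY hYX hl_ok hXl).
Qed.

End Main.

Theorem proposition4p1
  (R : realType) (q sq : R[i])
  (hq : transcendental q) (hsq : sq ^+ 2 = q)
  (U : algType R[i]) (E F G : U) (f : R[i] -> U)
  (hU : is_U q sq E F G f)
  (T : algType R[i]) (tens : U -> U -> T)
  (hT : is_tensor_square q sq E F G f tens)
  (Delta : U -> T) (hD : is_coproduct sq E F G f tens Delta)
  (Xc : U -> Prop) (hXc : right_coideal tens Delta Xc)
  (X : U) (hX : Xc X)
  (l : seq (pbw_index R)) (alpha : pbw_index R -> R[i])
  (hl_uniq : uniq l) (hl_ok : forall x, x \in l -> pbw_ok x)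
  (hXl : X = \sum_(x <- l) alpha x *: pbw q sq E F G f x) :
  (forall (r : nat) (mu : R[i]) (s t : nat), mu != 0 ->
      Xc (Xrmst q sq E F G f l alpha r mu s t)) /\
  (let Lin := span_of (fun p : nat * R[i] * nat * nat => p.1.1.2 != 0)
                (fun p => Xrmst q sq E F G f l alpha p.1.1.1 p.1.1.2 p.1.2 p.2) in
   [/\ right_coideal tens Delta Lin, Lin X &
       forall Y : U -> Prop, right_coideal tens Delta Y -> Y X ->
         forall y, Lin y -> Y y]).
Proof.
exact: (final hq hsq hU hT hD hXc hX hl_uniq hl_ok hXl).
Qed.
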